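(* For integers $s\ge t\ge 2$, $${\rm dim}_s(K_{1,s}\diamond K_{1,t})=\begin{cases} st+s-1 & \text{if } t=2,\\ st+s & \text{if } t>2.\end{cases}$$
   Context: The modular product $G\diamond H$ has vertex set $V(G)\times V(H)$; distinct vertices $(g,h)$ and $(g',h')$ are adjacent iff ($g=g'$ and $hh'\in E(H)$), or ($gg'\in E(G)$ and $h=h'$), or ($gg'\in E(G)$ and $hh'\in E(H)$), or ($g\neq g'$, $h\neq h'$, $gg'\notin E(G)$ and $hh'\notin E(H)$). For a connected graph $X$, a vertex $z$ strongly resolves distinct vertices $x,y$ if $d_X(y,z)=d_X(y,x)+d_X(x,z)$ or $d_X(x,z)=d_X(x,y)+d_X(y,z)$; a strong metric generator is a set $S\subseteq V(X)$ such that every pair of distinct vertices is strongly resolved by some vertex of $S$; ${\rm dim}_s(X)$, the strong metric dimension, is the minimum cardinality of a strong metric generator. $K_{1,s}$ is the star with $s$ leaves. *)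

(* Defs.v *)
(* Simple graphs as symmetric irreflexive relations on a finType. *)
From mathcomp Require Import all_boot.
Set Implicit Arguments. Unset Strict Implicit. Unset Printing Implicit Defensive.

Section Graphs.
Variable T : finType.
Implicit Types (e : rel T) (x y z : T) (S : {set T}).

Definition walk_of_len e x y (n : nat) : bool :=
  [exists p : n.-tuple T, path e x p && (last x p == y)].

(* graph distance: length of a shortest walk from x to y.  In a connected
   graph this is < #|T|; the value #|T| is returned when y is unreachable. *)
Definition dist e x y : nat := find (walk_of_len e x y) (iota 0 #|T|).

Definition strongly_resolves e z x y : bool :=
  (dist e y z == dist e y x + dist e x z) || (dist e x z == dist e x y + dist e y z).

Definition strong_metric_generator e S : bool :=
  [forall x, forall y, (x != y) ==> [exists z in S, strongly_resolves e z x y]].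

(* strong metric dimension: minimum cardinality of a strong metric generator
   (the whole vertex set is always one) *)
Definition sdim e : nat :=
  #|[arg min_(S < [set: T] | strong_metric_generator e S) #|S|]|.

End Graphs.

(* the star K_{1,s}: vertex set 'I_(s+1), centre ord0, leaves 1..s *)
Definition star (s : nat) : rel 'I_s.+1 :=
  fun i j => (i != j) && ((i == ord0) || (j == ord0)).
Arguments star s : clear implicits.

Definition modular_product (TG TH : finType) (eG : rel TG) (eH : rel TH)
  : rel (TG * TH) :=
  fun u v =>
    let: (g, h) := u in let: (g', h') := v in
    (u != v) &&
    [|| (g == g') && eH h h',
        eG g g' && (h == h'),
        eG g g' && eH h h'
      | [&& g != g', h != h', ~~ eG g g' & ~~ eH h h']].

(* Main.v *)
Require Import Defs.
From mathcomp Require Import all_boot.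
From mathcomp Require Import zify.
Set Implicit Arguments. Unset Strict Implicit. Unset Printing Implicit Defensive.

Section Gen.
Variable T : finType.
Variable e : rel T.
Hypothesis esym : forall x y, e x y = e y x.
Variable u0 : T.
Hypothesis hu : forall v, v != u0 -> e u0 v.
Hypothesis hT : 2 < #|T|.

Lemma walk0 x y : walk_of_len e x y 0 = (x == y).
Proof.
apply/existsP/idP => [[p /andP[_]]|/eqP->].
  by rewrite (tuple0 p).
by exists [tuple]; rewrite /= eqxx.
Qed.

Lemma walk1 x y : walk_of_len e x y 1 = e x y.
Proof.
apply/existsP/idP => [[[[|a [|b l]] //= _]]|H].
  by rewrite andbT => /andP[H /eqP<-].
by exists [tuple y]; rewrite /= H eqxx.
Qed.

Lemma walk2 x y w : e x w -> e w y -> walk_of_len e x y 2.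
Proof. by move=> H1 H2; apply/existsP; exists [tuple w; y]; rewrite /= H1 H2 eqxx. Qed.

Lemma distE x y : dist e x y = if x == y then 0 else if e x y then 1 else 2.
Proof.
rewrite /dist -(subnKC hT) iotaD /= walk0 walk1.
case: eqP => // nxy; case exy: (e x y) => //.
have -> : walk_of_len e x y 2 => //.
have xu : x != u0.
  apply/eqP => E; subst x; move: exy; rewrite hu //; by apply/eqP => E; apply: nxy.
have yu : y != u0.
  apply/eqP => E; subst y; move: exy; rewrite esym hu //; by apply/eqP.
by apply: (walk2 (w := u0)); rewrite ?hu // esym hu.
Qed.

Lemma gen_clique (S : {set T}) : strong_metric_generator e S ->
  forall x y, x \notin S -> y \notin S -> x != y -> e x y.
Proof.
move=> /forallP gS x y xS yS nxy.
have /existsP[z /andP[zS]] := implyP (forallP (gS x) y) nxy.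
have nxz : x != z by apply: contraNneq xS => ->.
have nyz : y != z by apply: contraNneq yS => ->.
have nyx : y != x by rewrite eq_sym.
rewrite /strongly_resolves !distE ?(negbTE nxy) ?(negbTE nyx) ?(negbTE nxz) ?(negbTE nyz) (esym y x).
by case: (e x y) => //; case: (e y z); case: (e x z).
Qed.

Lemma gen_of (S : {set T}) : (forall x y, x \notin S -> y \notin S -> x != y ->
   e x y /\ exists z, z \in S /\ e x z != e y z) -> strong_metric_generator e S.
Proof.
move=> H; apply/forallP => x; apply/forallP => y; apply/implyP => nxy.
case xS: (x \in S).
  apply/existsP; exists x; rewrite xS /= /strongly_resolves.
  by rewrite (distE x x) eqxx addn0 eqxx.
case yS: (y \in S).
  apply/existsP; exists y; rewrite yS /= /strongly_resolves.
  by rewrite (distE y y) eqxx addn0 eqxx orbT.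
have [exy [z [zS dz]]] := H x y (negbT xS) (negbT yS) nxy.
apply/existsP; exists z; rewrite zS /=.
have nxz : x != z by apply: contraFneq xS => ->.
have nyz : y != z by apply: contraFneq yS => ->.
have nyx : y != x by rewrite eq_sym.
rewrite /strongly_resolves !distE ?(negbTE nxy) ?(negbTE nyx) ?(negbTE nxz) ?(negbTE nyz) (esym y x) exy.
by move: dz; case: (e x z); case: (e y z).
Qed.

Lemma sdimE m : (exists S : {set T}, strong_metric_generator e S /\ #|S| = m) ->
  (forall S : {set T}, strong_metric_generator e S -> m <= #|S|) -> sdim e = m.
Proof.
move=> [S0 [g0 c0]] low; rewrite /sdim.
have gT : strong_metric_generator e [set: T].
  by apply: gen_of => x y; rewrite in_setT.
case: arg_minnP => // S gS minS.
apply/eqP; rewrite eqn_leq low // andbT -c0; exact: minS.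
Qed.
End Gen.

Definition starN (i j : nat) := (i != j) && ((i == 0) || (j == 0)).
Definition adjN a b a' b' :=
  ((a != a') || (b != b')) && [|| (a == a') && starN b b', starN a a' && (b == b'), starN a a' && starN b b' | [&& a != a', b != b', ~~ starN a a' & ~~ starN b b']].
Ltac bt := repeat (match goal with
 | |- context [if @eq_op _ ?x ?y then _ else _] =>
   let T := type of x in unify T nat;
   let E := fresh "E" in case: (x =P y) => E; try subst; rewrite ?eqxx /=
 | |- context [@eq_op _ ?x ?y] =>
   let T := type of x in unify T nat;
   let E := fresh "E" in case: (x =P y) => E; try subst; rewrite ?eqxx /=
 end); try done.

Lemma adjN_sym a b a' b' : adjN a b a' b' = adjN a' b' a b.
Proof. rewrite /adjN /starN; bt. Qed.

Lemma adjN_u0 a b : (a != 0) || (b != 0) -> adjN 0 0 a b.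
Proof. rewrite /adjN /starN; bt. Qed.

Lemma adjN_typeA a1 b1 a2 b2 a3 b3 : (a3 == 0) != (b3 == 0) -> (a1 == 0) = (a2 == 0) -> (b1 == 0) = (b2 == 0) ->
  ((a1 != a2) || (b1 != b2)) -> adjN a1 b1 a2 b2 -> ((a3 == a1) && (b3 == b1)) || adjN a3 b3 a1 b1 ->
  ((a3 == a2) && (b3 == b2)) || adjN a3 b3 a2 b2 -> False.
Proof. rewrite /adjN /starN; bt. Qed.

Lemma adjN_typeC a1 b1 a2 b2 : (a1 == 0) = (b1 == 0) -> (a2 == 0) = (b2 == 0) -> b1 = b2 ->
  ((a1 != a2) || (b1 != b2)) -> adjN a1 b1 a2 b2 -> False.
Proof. move=> h1 h2 E; subst b2; move: h1 h2; rewrite /adjN /starN; bt. Qed.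

Definition Wit (i j : nat) := if i == 0 then (if j == 1 then 2 else 1)
   else if j == 0 then (if i == 1 then 2 else 1) else i.

Lemma wit_diag i j : i != j -> adjN i i 0 (Wit i j) != adjN j j 0 (Wit i j).
Proof. rewrite /Wit /adjN /starN; bt. Qed.

Lemma wit_nz i j : Wit i j != 0.
Proof. rewrite /Wit; bt. Qed.

Lemma wit_le i j t : 2 <= t -> i <= t -> j <= t -> Wit i j <= t.
Proof. move=> h2 hi hj; rewrite /Wit; do !case: ifP => _; by rewrite // (leq_trans _ h2). Qed.

Lemma adjN_diag i j : i != j -> adjN i i j j.
Proof. rewrite /adjN /starN; bt. Qed.

Definition cand := [:: (0,2);(1,2);(2,2);(2,0);(2,1)].

Lemma cand_ok (p q p' q' : bool) : (p != p') || (q != q') ->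
  has (fun z => adjN p q z.1 z.2 != adjN p' q' z.1 z.2) cand.
Proof. by case: p; case: q; case: p'; case: q'. Qed.

Lemma cand_all : all (fun z => (z.1 <= 2) && (z.2 <= 2) && ((z.1 == 2) || (z.2 == 2))) cand.
Proof. by []. Qed.

Lemma adjN_bits (p q p' q' : bool) : (p != p') || (q != q') -> adjN p q p' q'.
Proof. by case: p; case: q; case: p'; case: q'. Qed.

Section Spec.
Variables s t : nat.
Hypothesis ht : 2 <= t.
Hypothesis hts : t <= s.
Local Notation T := ('I_s.+1 * 'I_t.+1)%type.
Local Notation E := (modular_product (star s) (star t)).

Lemma adjE (u v : T) : E u v = adjN u.1 u.2 v.1 v.2.
Proof. case: u v => [a b] [a' b']. by rewrite /modular_product /adjN /starN /star /= xpair_eqE negb_and. Qed.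

Lemma neqN (x y : T) : x != y -> (x.1 != y.1 :> nat) || (x.2 != y.2 :> nat).
Proof. by case: x y => a b [a' b']; rewrite xpair_eqE negb_and. Qed.

Lemma clique_bound (K : {set T}) : (forall x y, x \in K -> y \in K -> x != y -> E x y) ->
  #|K| <= maxn t.+1 4.
Proof.
move=> hK.
have adjK x y : x \in K -> y \in K -> x != y -> adjN x.1 x.2 y.1 y.2.
  by move=> *; rewrite -adjE hK.
case: (boolP [exists v in K, (nat_of_ord v.1 == 0) != (nat_of_ord v.2 == 0)]).
- case/exists_inP => v vK hv.
  pose f (u : T) := (nat_of_ord u.1 == 0, nat_of_ord u.2 == 0).
  rewrite -(card_in_imset (f:=f)); last first.
    move=> x y xK yK [h1 h2]; case: (eqVneq x y) => // nxy; exfalso.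
    apply: (adjN_typeA hv h1 h2 (neqN nxy) (adjK _ _ xK yK nxy)).
    + case: (eqVneq v x) => [->|nvx]; first by rewrite !eqxx.
      by rewrite adjK ?orbT.
    + case: (eqVneq v y) => [->|nvy]; first by rewrite !eqxx.
      by rewrite adjK ?orbT.
  apply: leq_trans (max_card _) _. by rewrite card_prod card_bool leq_maxr.
- rewrite negb_exists_in => /forall_inP hC.
  pose g (u : T) := u.2.
  rewrite -(card_in_imset (f:=g)); last first.
    move=> x y xK yK h2; case: (eqVneq x y) => // nxy; exfalso.
    apply: (adjN_typeC _ _ _ (neqN nxy) (adjK _ _ xK yK nxy)).
    + by have := hC x xK; rewrite negbK => /eqP.
    + by have := hC y yK; rewrite negbK => /eqP.
    + by rewrite /g in h2; rewrite h2.
  apply: leq_trans (max_card _) _. by rewrite card_ord leq_maxl.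
Qed.

Lemma cardT : #|{: T}| = s.+1 * t.+1.
Proof. by rewrite card_prod !card_ord. Qed.

Lemma upper1 : t != 2 -> exists S : {set T}, strong_metric_generator E S /\ #|S| = #|{: T}| - t.+1.
Proof.
move=> nt2.
have hst : t.+1 <= s.+1 by [].
pose K1 := [set (widen_ord hst i, i) | i : 'I_t.+1].
have cK : #|K1| = t.+1.
  rewrite card_imset ?card_ord // => i j [_ ->] //.
exists (~: K1); split; last by rewrite [#|~: _|]cardsCs setCK cK.
apply: (@gen_of _ _ _ (ord0, ord0)).
- by move=> x y; rewrite !adjE adjN_sym.
- move=> v nv; rewrite adjE adjN_u0 //. move: nv; apply: contraR.
  case: v => [a b] /=; rewrite negb_or !negbK => /andP[/eqP a0 /eqP b0].
  by apply/eqP; congr pair; apply/val_inj.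
- by rewrite cardT mulSn; exact: leq_trans ht (leq_addr _ _).
move=> x y; rewrite !in_setC !negbK => /imsetP[i _ ->] /imsetP[j _ ->] nxy.
have nij : (nat_of_ord i) != j by apply: contraNneq nxy => /val_inj ->.
split; first by rewrite adjE /=; apply: adjN_diag.
have wle : Wit i j < t.+1 by rewrite ltnS wit_le // -ltnS.
exists (ord0, inord (Wit i j)); split.
  rewrite in_setC; apply/imsetP => [[k _ [Ek1 Ek2]]].
  have := congr1 val Ek2; rewrite /= inordK // => Ek.
  move: Ek1; rewrite -Ek => Ew.
  by move: (wit_nz i j); rewrite -Ew.
by rewrite !adjE /= inordK //; apply: wit_diag.
Qed.

Lemma upper2 : t = 2 -> exists S : {set T}, strong_metric_generator E S /\ #|S| = #|{: T}| - 4.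
Proof.
move=> t2.
have b1 (b : bool) : b < s.+1 by case: b; rewrite // ltnS (leq_trans _ hts) // (leq_trans _ ht).
have b2 (b : bool) : b < t.+1 by case: b; rewrite // ltnS (leq_trans _ ht).
pose f (pq : bool * bool) : T := (inord pq.1, inord pq.2).
pose K2 := [set f pq | pq : bool * bool].
have fv pq : (nat_of_ord (f pq).1 = pq.1) /\ (nat_of_ord (f pq).2 = pq.2).
  by rewrite /f /= !inordK.
have cK : #|K2| = 4.
  rewrite card_imset ?card_prod ?card_bool //. move=> [p q] [p' q'] Efg.
  have [h1 h2] := fv (p, q); have [h1' h2'] := fv (p', q').
  have e1 := congr1 (fun u : T => nat_of_ord u.1) Efg.
  have e2 := congr1 (fun u : T => nat_of_ord u.2) Efg.
  rewrite /= in e1 e2 h1 h2 h1' h2'.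
  rewrite h1 h1' in e1; rewrite h2 h2' in e2.
  clear Efg h1 h2 h1' h2'; by move: e1 e2; case: p; case: q; case: p'; case: q'.
exists (~: K2); split; last by rewrite [#|~: _|]cardsCs setCK cK.
apply: (@gen_of _ _ _ (ord0, ord0)).
- by move=> x y; rewrite !adjE adjN_sym.
- move=> v nv; rewrite adjE adjN_u0 //. move: nv; apply: contraR.
  case: v => [a b] /=; rewrite negb_or !negbK => /andP[/eqP a0 /eqP b0].
  by apply/eqP; congr pair; apply/val_inj.
- by rewrite cardT mulSn; exact: leq_trans ht (leq_addr _ _).
move=> x y; rewrite !in_setC !negbK => /imsetP[[p q] _ ->] /imsetP[[p' q'] _ ->] nxy.
have [h1 h2] := fv (p, q); have [h1' h2'] := fv (p', q').
rewrite /= in h1 h2 h1' h2'.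
have npq : (p != p') || (q != q').
  apply: contraNT nxy; rewrite negb_or !negbK => /andP[/eqP -> /eqP ->]; by [].
split; first by rewrite adjE h1 h2 h1' h2'; apply: adjN_bits.
have /hasP[z zc hz] := cand_ok npq.
have /andP[/andP[z1 z2] z12] := allP cand_all z zc.
have z1s : z.1 < s.+1 by rewrite ltnS (leq_trans z1) // (leq_trans ht).
have z2t : z.2 < t.+1 by rewrite ltnS t2.
exists (inord z.1, inord z.2); split.
  rewrite in_setC; apply/imsetP => [[[p'' q''] _ Ez]].
  have e1 := congr1 (fun u : T => nat_of_ord u.1) Ez.
  have e2 := congr1 (fun u : T => nat_of_ord u.2) Ez.
  have [h1'' h2''] := fv (p'', q''). rewrite /= in e1 e2 h1'' h2''.
  rewrite inordK // h1'' in e1; rewrite inordK // h2'' in e2.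
  clear Ez h1'' h2''; by move: z12; rewrite e1 e2; clear e1 e2; case: p''; case: q''.
by rewrite !adjE /= !inordK // -?h1 -?h2 -?h1' -?h2'.
Qed.

Lemma Esym (x y : T) : E x y = E y x.
Proof. by rewrite !adjE adjN_sym. Qed.

Lemma Eu0 (v : T) : v != (ord0, ord0) -> E (ord0, ord0) v.
Proof.
move=> nv; rewrite adjE adjN_u0 //. move: nv; apply: contraR.
case: v => [a b] /=; rewrite negb_or !negbK => /andP[/eqP a0 /eqP b0].
by apply/eqP; congr pair; apply/val_inj.
Qed.

Lemma ET : 2 < #|{: T}|.
Proof. by rewrite cardT mulSn; exact: leq_trans ht (leq_addr _ _). Qed.
End Spec.

Theorem mainTheorem8 (s t : nat) (ht : 2 <= t) (hts : t <= s) :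
  sdim (modular_product (star s) (star t)) =
  (if t == 2 then s * t + s - 1 else s * t + s).
Proof.
pose k := if t == 2 then 4 else t.+1.
have hk : maxn t.+1 4 = k.
  rewrite /k; case: eqP => [->|nt] //; apply/maxn_idPl.
  lia.
have hT := @ET s t ht.
rewrite (@sdimE _ _ (@Esym s t) (ord0, ord0) (@Eu0 s t) hT (#|{: 'I_s.+1 * 'I_t.+1}| - k)).
- rewrite cardT /k; case: eqP => [->|_]; lia.
- rewrite /k; case: eqP => t2; [exact: upper2 | apply: upper1 => //; exact/eqP].
- move=> S gS. rewrite [#|S|]cardsCs leq_sub2l // -hk clique_bound // => x y.
  rewrite !in_setC => xS yS; exact: (gen_clique (@Esym s t) (@Eu0 s t) hT gS xS yS).
Qed.
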